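(* Let $n\ge1$ and let $C$ be the $n\times n$ matrix with entries in $OPol_n$ whose $(i,i-1)$-entry is $1$ for $2\le i\le n$, whose $(i,n)$-entry is $(-1)^{n-i}e^{(n)}_{n+1-i}$ for $1\le i\le n$, and all other entries $0$ (the non-commutative companion matrix of $(t-x_1)\cdots(t-x_n)$). Then for all $1\le i,j\le n$ and $k\ge0$, the $(i,j)$-entry of $C^k$ (matrix multiplication in the given order in the non-commutative ring $OPol_n$) equals $$c_{i,j;k}:=\sum_{t=0}^{\min(k+j-i,\,n-i)}(-1)^te^{(n)}_th^{(n)}_{k+j-i-t},$$ which is $0$ if $k<i-j$ and $1$ if $k=i-j$.
   Context: $\Bbbk$ is a field of characteristic $\neq2$. $OPol_n$ is the graded superalgebra generated by odd degree-2 elements $x_1,\dots,x_n$ with $x_jx_i=-x_ix_j$ ($i\ne j$). $e_r^{(n)}:=\sum_{1\le i_1<\cdots<i_r\le n}x_{i_1}\cdots x_{i_r}$ and $h_r^{(n)}:=\sum_{n\ge i_r\ge\cdots\ge i_1\ge1}x_{i_r}\cdots x_{i_1}$ for $r\ge0$, with $e_0^{(n)}=h_0^{(n)}=1$, and $h^{(n)}_r:=0$ for $r<0$. *)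

(* Defs.v *)
From HB Require Import structures.
From mathcomp Require Import all_boot all_order all_algebra.
Set Implicit Arguments. Unset Strict Implicit. Unset Printing Implicit Defensive.
Import Order.TTheory GRing.Theory Num.Theory.
Local Open Scope ring_scope.

(* Generators x : 'I_n -> R (0-based: x i = x_{i+1}) of a ring R satisfying the
   defining relations of OPol_n: x_j x_i = - x_i x_j for i <> j. *)
Definition anticommuting (R : pzRingType) (n : nat) (x : 'I_n -> R) : Prop :=
  forall i j : 'I_n, i != j -> x j * x i = - (x i * x j).

Definition esym (R : pzRingType) (n : nat) (x : 'I_n -> R) (r : nat) : R :=
  \sum_(t : r.-tuple 'I_n | sorted (fun a b : 'I_n => (a < b)%N) t)
     \prod_(i <- t) x i.

Definition hsym (R : pzRingType) (n : nat) (x : 'I_n -> R) (r : nat) : R :=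
  \sum_(t : r.-tuple 'I_n | sorted (fun a b : 'I_n => (b <= a)%N) t)
     \prod_(i <- t) x i.

(* c_{i,j;k} with 1-based i, j; empty sum (=0) when k + j - i < 0. *)
Definition cijk (R : pzRingType) (n : nat) (x : 'I_n -> R) (i j k : nat) : R :=
  if (k + j < i)%N then 0
  else \sum_(0 <= t < (minn (k + j - i) (n - i)).+1)
         (-1) ^+ t * esym x t * hsym x (k + j - i - t).

(* The non-commutative companion matrix (0-based indices):
   entry (i, n-1) = (-1)^(n-1-i) e_{n-i}, entry (j+1, j) = 1, others 0. *)
Definition companion (R : pzRingType) (n : nat) (x : 'I_n -> R) : 'M[R]_n :=
  \matrix_(i < n, j < n)
    if (j == n.-1 :> nat) then (-1) ^+ (n.-1 - i) * esym x (n - i)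
    else if (i == j.+1 :> nat) then 1 else 0.

Definition mxpow (R : pzRingType) (n : nat) (A : 'M[R]_n) (k : nat) : 'M[R]_n :=
  iter k (fun M => M *m A) 1%:M.

(* Main.v *)
Require Import Defs.
From HB Require Import structures.
From mathcomp Require Import all_boot all_order all_algebra.
From mathcomp Require Import zify.
Set Implicit Arguments. Unset Strict Implicit. Unset Printing Implicit Defensive.
Import GRing.Theory.
Local Open Scope ring_scope.

Lemma cons_decomp (R : pzRingType) n (x : 'I_n -> R) r (P : pred (seq 'I_n)) :
 \sum_(t : r.+1.-tuple 'I_n | P t) \prod_(i <- t) x i =
 \sum_(a : 'I_n) x a * \sum_(t : r.-tuple 'I_n | P (a :: t)) \prod_(i <- t) x i.
Proof.
rewrite (reindex (fun p : 'I_n * r.-tuple 'I_n => [tuple of p.1 :: p.2])) /=.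
  under [RHS]eq_bigr => a _ do rewrite mulr_sumr.
  rewrite pair_big_dep /=; apply: eq_big => -[a t] //= _.
  by rewrite big_cons.
exists (fun t : r.+1.-tuple 'I_n => (thead t, [tuple of behead t])).
  case=> a t _ /=; rewrite theadE; f_equal; exact: val_inj.
by move=> t _; rewrite [RHS]tuple_eta; apply: val_inj.
Qed.

Lemma rcons_decomp (R : pzRingType) n (x : 'I_n -> R) r (P : pred (seq 'I_n)) :
 \sum_(t : r.+1.-tuple 'I_n | P t) \prod_(i <- t) x i =
 \sum_(a : 'I_n) (\sum_(t : r.-tuple 'I_n | P (rcons t a)) \prod_(i <- t) x i) * x a.
Proof.
rewrite (reindex (fun p : 'I_n * r.-tuple 'I_n => [tuple of rcons p.2 p.1])) /=.
  under [RHS]eq_bigr => a _ do rewrite mulr_suml.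
  rewrite pair_big_dep /=; apply: eq_big => -[a t] //= _.
  by rewrite -cats1 big_cat /= big_seq1.
exists (fun t : r.+1.-tuple 'I_n =>
   (last (thead t) (behead t), [tuple of belast (thead t) (behead t)])).
  case=> a t _ /=.
  set X := [tuple of rcons t a].
  have E : rcons t a = rcons (belast (thead X) (behead X)) (last (thead X) (behead X)).
    by rewrite -lastI -[RHS](congr1 val (tuple_eta X)).
  move/rcons_inj: E => [E1 E2]; f_equal => //; exact: val_inj.
move=> t _; apply: val_inj => /=.
by rewrite -lastI [in RHS](tuple_eta t).
Qed.

Lemma tele (R : pzRingType) (y : R) (H H' G G' : nat -> R) :
 H 0%N = 1 -> H' 0%N = 1 -> G 0%N = 1 -> G' 0%N = 1 ->
 (forall r, H r.+1 = H' r.+1 + H r * y) ->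
 (forall s, G s.+1 = G' s.+1 - y * G' s) ->
 forall m, \sum_(i < m.+1) H i * G (m - i)%N = \sum_(i < m.+1) H' i * G' (m - i)%N.
Proof.
move=> H0 H'0 G0 G'0 HS GS [|m].
  by rewrite !big_ord1 /= H0 H'0 G0 G'0.
rewrite big_ord_recr /= subnn G0 mulr1.
have E1 : \sum_(i < m.+1) H i * G (m.+1 - i)%N =
   \sum_(i < m.+1) H i * G' (m.+1 - i)%N - \sum_(i < m.+1) H i * y * G' (m - i)%N.
  rewrite -sumrB; apply: eq_bigr => i _.
  have hi : (i <= m)%N by rewrite -ltnS.
  by rewrite subSn // GS mulrBr mulrA.
have E2 : \sum_(i < m.+1) H i * G' (m.+1 - i)%N = G' m.+1 +
   \sum_(i < m) H' i.+1 * G' (m - i)%N + \sum_(i < m) H i * y * G' (m - i)%N.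
  rewrite big_ord_recl /= H0 mul1r subn0 -addrA -big_split /=.
  congr (_ + _); apply: eq_bigr => i _.
  by rewrite /bump /= add1n subSS HS mulrDl.
have E3 : \sum_(i < m.+1) H i * y * G' (m - i)%N =
   \sum_(i < m) H i * y * G' (m - i)%N + H m * y.
  by rewrite big_ord_recr /= subnn G'0 mulr1.
have E4 : \sum_(i < m.+2) H' i * G' (m.+1 - i)%N =
   G' m.+1 + \sum_(i < m) H' i.+1 * G' (m - i)%N + H' m.+1.
  rewrite big_ord_recl /= H'0 mul1r subn0 big_ord_recr /= subSS subnn G'0 mulr1 addrA.
  by congr (_ + _ + _).
rewrite E1 E2 E3 E4 HS.
set A := \sum_(i < m) _.
set B := \sum_(i < m) _.
rewrite opprD !addrA.
rewrite -[_ + B - B]addrA subrr addr0.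
by rewrite addrAC subrK.
Qed.

Lemma sum_tuple0 (R : pzRingType) n (x : 'I_n -> R) (P : pred (seq 'I_n)) :
 \sum_(t : 0.-tuple 'I_n | P t) \prod_(i <- t) x i = (P [::])%:R.
Proof.
rewrite big_mkcond (big_pred1 [tuple]) /=; last by move=> t; rewrite /= [t]tuple0; apply/esym/eqP.
by case: (P [::]); rewrite ?big_nil.
Qed.

Definition ltI n := fun a b : 'I_n => (a < b)%N.
Definition geI n := fun a b : 'I_n => (b <= a)%N.

Lemma ltI_tr n : transitive (@ltI n).
Proof. move=> a b c; exact: ltn_trans. Qed.
Lemma geI_tr n : transitive (@geI n).
Proof. move=> a b c h1 h2; exact: leq_trans h2 h1. Qed.

Lemma sorted_rconsE (T : Type) (e : rel T) (tr : transitive e) s a :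
  sorted e (rcons s a) = all (fun b => e b a) s && sorted e s.
Proof.
rewrite -[rcons s a]revK rev_rcons rev_sorted /=.
rewrite (path_sortedE (rev_trans tr)) all_rev rev_sorted.
by [].
Qed.

Definition Es (R : pzRingType) n (x : 'I_n -> R) (c r : nat) : R :=
  \sum_(t : r.-tuple 'I_n | sorted (@ltI n) t && all (fun a : 'I_n => (c <= a)%N) t)
     \prod_(i <- t) x i.
Definition Hs (R : pzRingType) n (x : 'I_n -> R) (c r : nat) : R :=
  \sum_(t : r.-tuple 'I_n | sorted (@geI n) t && all (fun a : 'I_n => (c <= a)%N) t)
     \prod_(i <- t) x i.
Definition Ep (R : pzRingType) n (x : 'I_n -> R) (c r : nat) : R :=
  \sum_(t : r.-tuple 'I_n | sorted (@ltI n) t && all (fun a : 'I_n => (a < c)%N) t)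
     \prod_(i <- t) x i.
Definition Hp (R : pzRingType) n (x : 'I_n -> R) (c r : nat) : R :=
  \sum_(t : r.-tuple 'I_n | sorted (@geI n) t && all (fun a : 'I_n => (a < c)%N) t)
     \prod_(i <- t) x i.

Lemma Es_S (R : pzRingType) n (x : 'I_n -> R) c r :
  Es x c r.+1 = \sum_(a : 'I_n | (c <= a)%N) x a * Es x a.+1 r.
Proof.
rewrite /Es (cons_decomp x r (fun s => sorted (@ltI n) s && all (fun a : 'I_n => (c <= a)%N) s)).
rewrite [RHS]big_mkcond /=; apply: eq_bigr => a _.
case: (leqP c a) => ca /=; last first.
  by rewrite big_pred0 ?mulr0 // => t /=; rewrite andbF.
congr (_ * _); apply: eq_bigl => t /=.
rewrite (path_sortedE (@ltI_tr n)) /=.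
case Ha: (all (ltI a) t); last by rewrite /= andbF.
have -> : all (fun b : 'I_n => (c <= b)%N) t.
  apply/allP => b /(allP Ha); rewrite /ltI => ab; exact: leq_trans ca (ltnW ab).
by [].
Qed.

Lemma Hs_S (R : pzRingType) n (x : 'I_n -> R) c r :
  Hs x c r.+1 = \sum_(a : 'I_n | (c <= a)%N) Hs x a r * x a.
Proof.
rewrite /Hs (rcons_decomp x r (fun s => sorted (@geI n) s && all (fun a : 'I_n => (c <= a)%N) s)).
rewrite [RHS]big_mkcond /=; apply: eq_bigr => a _.
case: (leqP c a) => ca /=; last first.
  by rewrite big_pred0 ?mul0r // => t /=; rewrite all_rcons (leqNgt c a) ca /= andbF.
congr (_ * _); apply: eq_bigl => t /=.
rewrite (sorted_rconsE (@geI_tr n)) all_rcons ca /=.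
case Ha: (all (fun b => geI b a) t); last by rewrite /= andbF.
have -> : all (fun b : 'I_n => (c <= b)%N) t.
  apply/allP => b /(allP Ha); rewrite /geI => ab; exact: leq_trans ca ab.
by rewrite andbT.
Qed.

Lemma Ep_S (R : pzRingType) n (x : 'I_n -> R) c r :
  Ep x c r.+1 = \sum_(a : 'I_n | (a < c)%N) Ep x a r * x a.
Proof.
rewrite /Ep (rcons_decomp x r (fun s => sorted (@ltI n) s && all (fun a : 'I_n => (a < c)%N) s)).
rewrite [RHS]big_mkcond /=; apply: eq_bigr => a _.
case: (ltnP a c) => ca /=; last first.
  by rewrite big_pred0 ?mul0r // => t /=; rewrite all_rcons (ltnNge a c) ca /= andbF.
congr (_ * _); apply: eq_bigl => t /=.
rewrite (sorted_rconsE (@ltI_tr n)) all_rcons ca /=.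
case Ha: (all (fun b => ltI b a) t); last by rewrite /= andbF.
have -> : all (fun b : 'I_n => (b < c)%N) t.
  apply/allP => b /(allP Ha); rewrite /ltI => ab; exact: ltn_trans ab ca.
by rewrite andbT.
Qed.

Lemma Hp_S (R : pzRingType) n (x : 'I_n -> R) c r :
  Hp x c r.+1 = \sum_(a : 'I_n | (a < c)%N) x a * Hp x a.+1 r.
Proof.
rewrite /Hp (cons_decomp x r (fun s => sorted (@geI n) s && all (fun a : 'I_n => (a < c)%N) s)).
rewrite [RHS]big_mkcond /=; apply: eq_bigr => a _.
case: (ltnP a c) => ca /=; last first.
  by rewrite big_pred0 ?mulr0 // => t /=; rewrite andbF.
congr (_ * _); apply: eq_bigl => t /=.
rewrite (path_sortedE (@geI_tr n)) /=.
have -> : all (fun b : 'I_n => (b < a.+1)%N) t = all (geI a) t.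
  by apply: eq_all => b; rewrite ltnS.
case Ha: (all (geI a) t); last by rewrite /= andbF.
have -> : all (fun b : 'I_n => (b < c)%N) t.
  apply/allP => b /(allP Ha); rewrite /geI => ab; exact: leq_ltn_trans ab ca.
by [].
Qed.

Lemma Es_step (R : pzRingType) n (x : 'I_n -> R) (c : 'I_n) r :
  Es x c r.+1 = x c * Es x c.+1 r + Es x c.+1 r.+1.
Proof.
rewrite !Es_S (bigD1 c) //=; congr (_ + _); apply: eq_bigl => a.
by rewrite [RHS]ltn_neqAle andbC eq_sym.
Qed.

Lemma Hs_step (R : pzRingType) n (x : 'I_n -> R) (c : 'I_n) r :
  Hs x c r.+1 = Hs x c r * x c + Hs x c.+1 r.+1.
Proof.
rewrite !Hs_S (bigD1 c) //=; congr (_ + _); apply: eq_bigl => a.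
by rewrite [RHS]ltn_neqAle andbC eq_sym.
Qed.

Lemma Ep_step (R : pzRingType) n (x : 'I_n -> R) (c : 'I_n) r :
  Ep x c.+1 r.+1 = Ep x c r * x c + Ep x c r.+1.
Proof.
rewrite !Ep_S (bigD1 c) //=; congr (_ + _); apply: eq_bigl => a.
by rewrite ltnS [RHS]ltn_neqAle andbC.
Qed.

Lemma Hp_step (R : pzRingType) n (x : 'I_n -> R) (c : 'I_n) r :
  Hp x c.+1 r.+1 = x c * Hp x c.+1 r + Hp x c r.+1.
Proof.
rewrite !Hp_S (bigD1 c) //=; congr (_ + _); apply: eq_bigl => a.
by rewrite ltnS [RHS]ltn_neqAle andbC.
Qed.

Lemma Es_top (R : pzRingType) n (x : 'I_n -> R) c r :
  (n <= c)%N -> Es x c r = (r == 0)%:R.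
Proof.
move=> nc; case: r => [|r]; first by rewrite /Es (sum_tuple0 x (fun s => sorted (@ltI n) s && all (fun a : 'I_n => (c <= a)%N) s)).
rewrite Es_S big_pred0 // => a; apply/negbTE; rewrite -ltnNge.
exact: leq_trans (ltn_ord a) nc.
Qed.

Lemma Hs_top (R : pzRingType) n (x : 'I_n -> R) c r :
  (n <= c)%N -> Hs x c r = (r == 0)%:R.
Proof.
move=> nc; case: r => [|r]; first by rewrite /Hs (sum_tuple0 x (fun s => sorted (@geI n) s && all (fun a : 'I_n => (c <= a)%N) s)).
rewrite Hs_S big_pred0 // => a; apply/negbTE; rewrite -ltnNge.
exact: leq_trans (ltn_ord a) nc.
Qed.

Lemma Ep_0 (R : pzRingType) n (x : 'I_n -> R) r : Ep x 0 r = (r == 0)%:R.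
Proof.
case: r => [|r]; first by rewrite /Ep (sum_tuple0 x (fun s => sorted (@ltI n) s && all (fun a : 'I_n => (a < 0)%N) s)).
by rewrite Ep_S big_pred0.
Qed.

Lemma Hp_0 (R : pzRingType) n (x : 'I_n -> R) r : Hp x 0 r = (r == 0)%:R.
Proof.
case: r => [|r]; first by rewrite /Hp (sum_tuple0 x (fun s => sorted (@geI n) s && all (fun a : 'I_n => (a < 0)%N) s)).
by rewrite Hp_S big_pred0.
Qed.

Lemma Es_esym (R : pzRingType) n (x : 'I_n -> R) r : Es x 0 r = Defs.esym x r.
Proof.
apply: eq_bigl => t.
have -> : all (fun a : 'I_n => (0 <= a)%N) t by apply/allP.
by rewrite andbT.
Qed.

Lemma Hs_hsym (R : pzRingType) n (x : 'I_n -> R) r : Hs x 0 r = hsym x r.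
Proof.
apply: eq_bigl => t.
have -> : all (fun a : 'I_n => (0 <= a)%N) t by apply/allP.
by rewrite andbT.
Qed.

Lemma Ep_esym (R : pzRingType) n (x : 'I_n -> R) r : Ep x n r = Defs.esym x r.
Proof.
apply: eq_bigl => t.
have -> : all (fun a : 'I_n => (a < n)%N) t by apply/allP => a _; exact: ltn_ord.
by rewrite andbT.
Qed.

Lemma Hp_hsym (R : pzRingType) n (x : 'I_n -> R) r : Hp x n r = hsym x r.
Proof.
apply: eq_bigl => t.
have -> : all (fun a : 'I_n => (a < n)%N) t by apply/allP => a _; exact: ltn_ord.
by rewrite andbT.
Qed.

Lemma Es_r0 (R : pzRingType) n (x : 'I_n -> R) c : Es x c 0 = 1.
Proof. by rewrite /Es (sum_tuple0 x (fun s => sorted (@ltI n) s && all (fun a : 'I_n => (c <= a)%N) s)). Qed.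

Lemma Hs_r0 (R : pzRingType) n (x : 'I_n -> R) c : Hs x c 0 = 1.
Proof. by rewrite /Hs (sum_tuple0 x (fun s => sorted (@geI n) s && all (fun a : 'I_n => (c <= a)%N) s)). Qed.

Lemma Ep_r0 (R : pzRingType) n (x : 'I_n -> R) c : Ep x c 0 = 1.
Proof. by rewrite /Ep (sum_tuple0 x (fun s => sorted (@ltI n) s && all (fun a : 'I_n => (a < c)%N) s)). Qed.

Lemma Hp_r0 (R : pzRingType) n (x : 'I_n -> R) c : Hp x c 0 = 1.
Proof. by rewrite /Hp (sum_tuple0 x (fun s => sorted (@geI n) s && all (fun a : 'I_n => (a < c)%N) s)). Qed.

Lemma RI_c (R : pzRingType) n (x : 'I_n -> R) d c : (c + d)%N = n -> forall m,
  \sum_(i < m.+1) Hs x c i * ((-1) ^+ (m - i) * Es x c (m - i)%N) = (m == 0)%:R.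
Proof.
elim: d c => [|d IH] c hcd m.
  rewrite addn0 in hcd.
  rewrite big_ord_recl /= Hs_r0 mul1r subn0 Es_top ?hcd //.
  rewrite big1 ?addr0; last by move=> i _; rewrite Hs_top ?hcd // mul0r.
  by case: m => [|m] /=; rewrite ?mulr0 ?mulr1.
have hc : (c < n)%N by rewrite -hcd addnS ltnS leq_addr.
pose co := Ordinal hc.
rewrite (@tele R (x co) (Hs x c) (Hs x c.+1) (fun s => (-1) ^+ s * Es x c s)
           (fun s => (-1) ^+ s * Es x c.+1 s)).
- by apply: IH; rewrite addSnnS.
- exact: Hs_r0.
- exact: Hs_r0.
- by rewrite Es_r0 mulr1.
- by rewrite Es_r0 mulr1.
- by move=> r; rewrite (Hs_step x co r) addrC.
move=> s; rewrite (Es_step x co s) mulrDr addrC exprS mulN1r mulNr.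
by rewrite mulNr mulrA -(commr_sign (x co) s) -mulrA.
Qed.

Lemma RI (R : pzRingType) n (x : 'I_n -> R) m :
  \sum_(i < m.+1) hsym x i * ((-1) ^+ (m - i) * Defs.esym x (m - i)%N) = (m == 0)%:R.
Proof.
rewrite -(@RI_c R n x n 0 (add0n n) m).
by apply: eq_bigr => i _; rewrite Hs_hsym Es_esym.
Qed.

Lemma LI_c (R : pzRingType) n (x : 'I_n -> R) c : (c <= n)%N -> forall m,
  \sum_(i < m.+1) ((-1) ^+ (m - i) * Ep x c (m - i)%N) * Hp x c i = (m == 0)%:R.
Proof.
elim: c => [|c IH] hc m.
  rewrite big_ord_recl /= Hp_r0 mulr1 subn0 Ep_0.
  rewrite big1 ?addr0; last by move=> i _; rewrite Hp_0 mulr0.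
  by case: m => [|m] /=; rewrite ?mulr0 ?mulr1.
pose co := Ordinal hc.
have := @tele R^c (x co) (Hp x c.+1) (Hp x c) (fun s => (-1) ^+ s * Ep x c.+1 s)
           (fun s => (-1) ^+ s * Ep x c s).
move=> T; rewrite -[RHS](IH (ltnW hc) m).
apply: T.
- exact: (@Hp_r0 R n x c.+1).
- exact: (@Hp_r0 R n x c).
- by rewrite Ep_r0 mulr1.
- by rewrite Ep_r0 mulr1.
- by move=> r; rewrite (Hp_step x co r) addrC.
move=> s.
have E : (-1) ^+ s.+1 * Ep x c.+1 s.+1 =
   (-1) ^+ s.+1 * Ep x c s.+1 - ((-1) ^+ s * Ep x c s) * x co :> R.
  by rewrite (Ep_step x co s) mulrDr addrC exprS mulN1r !mulNr mulrA.
exact: E.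
Qed.

Lemma Ep_vanish (R : pzRingType) n (x : 'I_n -> R) r c : (c < r)%N -> Ep x c r = 0.
Proof.
elim: r c => [|r IH] c // hc.
rewrite Ep_S big1 // => a ac; rewrite IH ?mul0r //.
by apply: leq_trans ac _; rewrite -ltnS.
Qed.

Lemma esym_vanish (R : pzRingType) n (x : 'I_n -> R) r : (n < r)%N -> Defs.esym x r = 0.
Proof. by move=> h; rewrite -Ep_esym Ep_vanish. Qed.

Lemma esym0 (R : pzRingType) n (x : 'I_n -> R) : Defs.esym x 0 = 1.
Proof. by rewrite -Ep_esym Ep_r0. Qed.

Lemma hsym0 (R : pzRingType) n (x : 'I_n -> R) : hsym x 0 = 1.
Proof. by rewrite -Hp_hsym Hp_r0. Qed.

Lemma LI (R : pzRingType) n (x : 'I_n -> R) m :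
  \sum_(0 <= t < m.+1) (-1) ^+ t * Defs.esym x t * hsym x (m - t)%N = (m == 0)%:R.
Proof.
rewrite -(@LI_c R n x n (leqnn n) m) big_rev_mkord subn0.
apply: eq_bigr => i _; rewrite Ep_esym Hp_hsym subSS subKn //.
by rewrite -ltnS.
Qed.

Lemma RI' (R : pzRingType) n (x : 'I_n -> R) N : (0 < N)%N ->
  \sum_(l < n) (if (l < N)%N then hsym x (N - l.+1)%N * ((-1) ^+ l * Defs.esym x l.+1) else 0)
  = hsym x N.
Proof.
move=> N0.
pose g s := hsym x (N - s.+1)%N * ((-1) ^+ s * Defs.esym x s.+1).
have E1 : \sum_(s < N) g s = hsym x N.
  have := RI x N; rewrite (negbTE (lt0n_neq0 N0)) (reindex_inj rev_ord_inj) big_ord_recl /=.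
  rewrite subn1 /= subnn expr0 mul1r esym0 mulr1.
  move/eqP; rewrite addr_eq0 => /eqP ->; rewrite -sumrN; apply: eq_bigr => i _.
  rewrite /g /bump /= add1n subSS subKn //.
  by rewrite exprS mulN1r mulNr mulrN opprK.
rewrite -E1 (big_ord_widen (n + N) g (leq_addl n N)).
rewrite (big_ord_widen (n + N) (fun s => if (s < N)%N then g s else 0) (leq_addr N n)).
rewrite big_mkcond [RHS]big_mkcond; apply: eq_bigr => s _.
case: (ltnP s n) => sn; case: (ltnP s N) => sN //=.
by rewrite /g esym_vanish ?mulr0.
Qed.

Lemma cijk_shift (R : pzRingType) n (x : 'I_n -> R) (i j k : nat) :
  cijk x i j.+1 k = cijk x i j k.+1.
Proof. by rewrite /cijk addnS addSn. Qed.

Lemma cijk_alt (R : pzRingType) n (x : 'I_n -> R) (i j k : nat) :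
  cijk x i.+1 j.+1 k = \sum_(t < (n - i.+1).+1) (-1) ^+ t * Defs.esym x t *
     (if (t + i <= k + j)%N then hsym x (k + j - i - t)%N else 0).
Proof.
rewrite /cijk addnS ltnS subSS.
case: (ltnP (k + j) i) => hkj.
  rewrite big1 // => t _; rewrite ifF ?mulr0 //; apply/negbTE; rewrite -ltnNge.
  exact: ltn_addl.
have cond : forall t, (t + i <= k + j)%N = (t <= k + j - i)%N.
  by move=> t; rewrite leq_subRL // addnC.
rewrite -(big_mkord xpredT (fun t => (-1) ^+ t * Defs.esym x t * (if (t + i <= k + j)%N then hsym x (k + j - i - t)%N else 0))).
case: (leqP (k + j - i) (n - i.+1)) => hm.
  rewrite [RHS](big_cat_nat _ (n := (k + j - i).+1)) //=.
  rewrite [X in _ = _ + X]big1_seq ?addr0; last first.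
    move=> t /andP[_]; rewrite mem_index_iota => /andP[ht _].
    by rewrite cond leqNgt ht mulr0.
  by apply: eq_big_nat => t /andP[_ ht]; rewrite cond -ltnS ht.

apply: eq_big_nat => t /andP[_ ht]; rewrite cond ifT //.
by rewrite ltnS in ht; exact: leq_trans ht (ltnW hm).
Qed.

Lemma inner (R : pzRingType) n (x : 'I_n -> R) (i t k : nat) :
  (t + i < n)%N ->
  \sum_(l < n) (if (t + i <= k + l)%N then hsym x (k + l - i - t)%N else 0) *
      ((-1) ^+ (n.-1 - l) * Defs.esym x (n - l)%N)
  = hsym x (k.+1 + n.-1 - i - t)%N.
Proof.
move=> hti.
have N0 : (0 < k.+1 + n.-1 - i - t)%N by lia.
rewrite -(RI' x N0) (reindex_inj rev_ord_inj) /=.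
apply: eq_bigr => l _.
have hl := ltn_ord l.
have e1 : (n.-1 - (n - l.+1))%N = l by lia.
have e2 : (n - (n - l.+1))%N = l.+1 by lia.
have e3 : (t + i <= k + (n - l.+1))%N = (l < k.+1 + n.-1 - i - t)%N.
  by apply/idP/idP => ?; lia.
rewrite e1 e2 e3; case: ifP => // h.
  have -> : (k + (n - l.+1) - i - t = k.+1 + n.-1 - i - t - l.+1)%N by lia.
  by [].
by rewrite mul0r.
Qed.

Unset Implicit Arguments. Set Strict Implicit.

Theorem mainTheorem11 (K : fieldType) (hK : ~~ (2 \in [pchar K]%R))
  (R : algType K) (n : nat) (hn : (1 <= n)%N)
  (x : 'I_n -> R) (hx : anticommuting x) :
  forall (i j : 'I_n) (k : nat),
    mxpow (companion x) k i j = cijk x i.+1 j.+1 k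
    /\ ((k + j < i)%N -> cijk x i.+1 j.+1 k = 0)
    /\ ((k + j)%N = i -> cijk x i.+1 j.+1 k = 1).
Proof.
have ent : forall k (i j : 'I_n), mxpow (companion x) k i j = cijk x i.+1 j.+1 k.
  elim=> [|k IH] i j.
    rewrite /mxpow /= mxE /cijk add0n ltnS subSS.
    case: (ltnP j i) => hji.
      have -> : (i == j) = false.
        by apply/negbTE/eqP => E; move: hji; rewrite E ltnn.
      by rewrite mulr0n.
    have hjn := ltn_ord j.
    rewrite (minn_idPl _); last by lia.
    rewrite LI.
    case: eqP => [->|nij]; first by rewrite subnn.
    have nij' : (i : nat) <> j by move=> h; apply: nij; apply: val_inj.
    by have -> : (j - i == 0)%N = false by apply/eqP; lia.
  change (mxpow (companion x) k.+1) with (mxpow (companion x) k *m companion x).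
  rewrite mxE.
  under eq_bigr => l _ do rewrite IH /companion mxE.
  case: (eqVneq (j : nat) n.-1) => hj.
    under eq_bigr => l _ do rewrite cijk_alt mulr_suml.
    rewrite exchange_big cijk_alt /=; apply: eq_bigr => t _.
    under eq_bigr => l _ do rewrite -!mulrA.
    rewrite -!mulr_sumr mulrA; congr (_ * _).
    have ht := ltn_ord t; have hi := ltn_ord i.
    rewrite hj inner; last by lia.
    by rewrite ifT //; lia.
  have hj1 : (j.+1 < n)%N by have := ltn_ord j; lia.
  rewrite (bigD1 (Ordinal hj1)) //= eqxx mulr1 big1 ?addr0 ?cijk_shift //.
  move=> l hl; rewrite ifF ?mulr0 //; apply: contraNF hl => /eqP h.
  by apply/eqP; apply: val_inj.
move=> i j k; split; first exact: ent.
split; first by move=> h; rewrite /cijk addnS ltnS h.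
move=> h; rewrite /cijk addnS ltnS h ltnn subnn min0n big_nat1 expr0 mul1r.
by rewrite esym0 hsym0 mulr1.
Qed.
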